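(* Let $G$ be a countable residually finite group, $r>1$ an integer, and let $\eta\in\{1,\dots,r\}^G$ and $(\Gamma_n)_{n\ge1}$ be as constructed below. Then $(\Gamma_n)_{n\ge1}$ is a period structure for $\eta$; in particular each $\Gamma_n$ is an essential group of periods of $\eta$.
   Context: Setting: $(\Gamma_i)_{i\ge1}$ is a strictly decreasing sequence of finite index normal subgroups of $G$ with $\bigcap_i\Gamma_i=\{1_G\}$; put $\Gamma_0=G$. $(D_i)_{i\ge0}$ are finite subsets of $G$ with $D_0=\{1_G\}$, $D_i$ containing exactly one element of each coset of $\Gamma_i$, $1_G\in D_i\subseteq D_{i+1}$, $G=\bigcup_iD_i$, and $D_j=\bigcup_{v\in D_j\cap\Gamma_i}vD_i$ for $j>i\ge1$; also $[G:\Gamma_i]\ge3$ and $[\Gamma_i:\Gamma_{i+1}]\ge3$. Let $\Sigma=\{1,\dots,r\}$ and for $m\ge0$ let $\alpha_m\in\Sigma$ with $\alpha_m\equiv m\pmod r$. Put $J(0)=\{1_G\}$ and $J(m)=D_m\setminus\bigcup_{i=0}^{m-1}J(i)\Gamma_{i+1}$ for $m\ge1$; the sets $J(m)\Gamma_{m+1}$ ($m\ge0$) partition $G$, and $\eta(hg)=\alpha_{m+1}$ for $h\in J(m)$, $g\in\Gamma_{m+1}$. Shift: $\sigma^gx(h)=x(g^{-1}h)$. $\mathrm{Per}(x,\Gamma,\alpha)=\{g: x(\gamma g)=\alpha\ \forall\gamma\in\Gamma\}$, $\mathrm{Per}(x,\Gamma)=\bigcup_\alpha\mathrm{Per}(x,\Gamma,\alpha)$.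 A finite index $\Gamma$ is a group of periods of $\eta$ if $\mathrm{Per}(\eta,\Gamma)\ne\emptyset$, essential if $\mathrm{Per}(\eta,\Gamma,\alpha)\subseteq\mathrm{Per}(\sigma^g\eta,\Gamma,\alpha)$ for every $\alpha\in\Sigma$ implies $g\in\Gamma$. A period structure is a nested sequence of essential groups of periods $(\Gamma_n)$ with $G=\bigcup_n\mathrm{Per}(\eta,\Gamma_n)$. *)

(* Defs.v *)
From Stdlib Require Import Arith List Lia.
Import ListNotations.
Set Implicit Arguments.

Section Defs.
Variable G : Type.
Variable mul : G -> G -> G.
Variable inv : G -> G.
Variable one : G.

Definition is_group : Prop :=
  (forall a b c, mul a (mul b c) = mul (mul a b) c) /\
  (forall a, mul one a = a) /\ (forall a, mul a one = a) /\
  (forall a, mul (inv a) a = one) /\ (forall a, mul a (inv a) = one).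

Definition countable_carrier : Prop := exists f : G -> nat, forall x y, f x = f y -> x = y.

Definition is_subgroup (H : G -> Prop) : Prop :=
  H one /\ (forall a b, H a -> H b -> H (mul a b)) /\ (forall a, H a -> H (inv a)).

Definition is_normal (H : G -> Prop) : Prop :=
  is_subgroup H /\ forall g h, H h -> H (mul (inv g) (mul h g)).

Definition finite_index (H : G -> Prop) : Prop :=
  exists l : list G, forall g, exists d, In d l /\ H (mul (inv d) g).

(* [K : L] >= k  (L subgroup of K): k elements of K in pairwise distinct L-cosets *)
Definition index_ge (K L : G -> Prop) (k : nat) : Prop :=
  exists f : nat -> G, (forall i, i < k -> K (f i)) /\
    (forall i j, i < j -> j < k -> ~ L (mul (inv (f i)) (f j))).

Definition residually_finite : Prop :=
  forall g, g <> one -> exists H, is_normal H /\ finite_index H /\ ~ H g.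

Definition alpha (r m : nat) : nat := if m mod r =? 0 then r else m mod r.

Definition in_Sigma (r a : nat) : Prop := 1 <= a /\ a <= r.

Definition shift (g : G) (x : G -> nat) : G -> nat := fun h => x (mul (inv g) h).

Definition Per_a (x : G -> nat) (H : G -> Prop) (a : nat) (g : G) : Prop :=
  forall c, H c -> x (mul c g) = a.

Definition Per (r : nat) (x : G -> nat) (H : G -> Prop) (g : G) : Prop :=
  exists a, in_Sigma r a /\ Per_a x H a g.

Definition group_of_periods (r : nat) (x : G -> nat) (H : G -> Prop) : Prop :=
  is_subgroup H /\ finite_index H /\ exists g, Per r x H g.

Definition essential (r : nat) (x : G -> nat) (H : G -> Prop) : Prop :=
  forall g, (forall a, in_Sigma r a ->
               forall h, Per_a x H a h -> Per_a (shift g x) H a h) -> H g.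

(* period structure: nested sequence (indexed by n = 0,1,2,...) of essential
   groups of periods whose Per sets cover G *)
Definition period_structure (r : nat) (x : G -> nat) (Gs : nat -> G -> Prop) : Prop :=
  (forall n g, Gs (S n) g -> Gs n g) /\
  (forall n, group_of_periods r x (Gs n) /\ essential r x (Gs n)) /\
  (forall g, exists n, Per r x (Gs n) g).

(* The sets J(m): J(0) = {1}, J(m) = D_m \ U_{i<m} J(i) Gamma_{i+1}.
   cov m g  <->  g in U_{i<m} J(i) Gamma_{i+1}. *)
Definition J_from (D : nat -> list G) (m : nat) (c : G -> Prop) (h : G) : Prop :=
  match m with
  | O => h = one
  | S _ => In h (D m) /\ ~ c h
  end.

Fixpoint cov (Gam : nat -> G -> Prop) (D : nat -> list G) (m : nat) : G -> Prop :=
  match m with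
  | O => fun _ => False
  | S m' => fun g => cov Gam D m' g \/
      exists h c, J_from D m' (cov Gam D m') h /\ Gam (S m') c /\ g = mul h c
  end.

Definition J (Gam : nat -> G -> Prop) (D : nat -> list G) (m : nat) : G -> Prop :=
  J_from D m (cov Gam D m).

End Defs.

(* Main.v *)
Require Import Defs.
From Stdlib Require Import Arith List Lia Classical.

Lemma alpha_neq (r m : nat) : 1 < r -> alpha r (S m) <> alpha r m.
Proof.
  intros Hr. unfold alpha.
  assert (K : (S m) mod r <> m mod r).
  { intro E. pose proof (Nat.div_mod_eq (S m) r) as E1.
    pose proof (Nat.div_mod_eq m r) as E2.
    rewrite E in E1. set (q1 := S m / r) in *. set (q2 := m / r) in *.
    destruct (Nat.le_gt_cases q1 q2) as [L|L].
    - assert (r * q1 <= r * q2) by (apply Nat.mul_le_mono_l; exact L). lia.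
    - assert (r * (S q2) <= r * q1) by (apply Nat.mul_le_mono_l; exact L). lia. }
  pose proof (Nat.mod_upper_bound (S m) r ltac:(lia)).
  pose proof (Nat.mod_upper_bound m r ltac:(lia)).
  destruct (Nat.eqb_spec (S m mod r) 0); destruct (Nat.eqb_spec (m mod r) 0); lia.
Qed.

Lemma alpha_in (r m : nat) : 1 < r -> in_Sigma r (alpha r m).
Proof.
  intros Hr. unfold in_Sigma, alpha.
  pose proof (Nat.mod_upper_bound m r ltac:(lia)).
  destruct (Nat.eqb_spec (m mod r) 0); lia.
Qed.

Ltac gs inv_mul inv_inv inv_one assoc idl idr invl_c invr_c invl invr := repeat first [rewrite inv_mul | rewrite inv_inv | rewrite inv_one
  | rewrite <- assoc | rewrite idl | rewrite idr | rewrite invl_c | rewrite invr_c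
  | rewrite invl | rewrite invr].

Theorem proposition4p1
  (G : Type) (mul : G -> G -> G) (inv : G -> G) (one : G)
  (HG : is_group mul inv one)
  (Hcount : countable_carrier G)
  (Hrf : residually_finite mul inv one)
  (r : nat) (Hr : 1 < r)
  (Gam : nat -> G -> Prop) (D : nat -> list G)
  (* Gamma_0 = G; for i >= 1 finite index normal subgroups *)
  (HGam0 : forall g, Gam 0 g)
  (HGnorm : forall i, 1 <= i -> is_normal mul inv one (Gam i))
  (HGfin : forall i, 1 <= i -> finite_index mul inv (Gam i))
  (* strictly decreasing *)
  (HGdec : forall i, 1 <= i -> forall g, Gam (S i) g -> Gam i g)
  (HGstrict : forall i, 1 <= i -> exists g, Gam i g /\ ~ Gam (S i) g)
  (* trivial intersection *)
  (HGint : forall g, (forall i, 1 <= i -> Gam i g) -> g = one)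
  (* index conditions *)
  (HGidx1 : forall i, 1 <= i -> index_ge mul inv (fun _ => True) (Gam i) 3)
  (HGidx2 : forall i, 1 <= i -> index_ge mul inv (Gam i) (Gam (S i)) 3)
  (* D_0 = {1} *)
  (HD0 : forall g, In g (D 0) <-> g = one)
  (* D_i contains exactly one element of each coset of Gamma_i *)
  (HDex : forall i g, exists d, In d (D i) /\ Gam i (mul (inv d) g))
  (HDun : forall i d d', In d (D i) -> In d' (D i) -> Gam i (mul (inv d) d') -> d = d')
  (* 1 in D_i subset D_{i+1} *)
  (HD1 : forall i, In one (D i))
  (HDinc : forall i g, In g (D i) -> In g (D (S i)))
  (* G = U_i D_i *)
  (HDcov : forall g, exists i, In g (D i))
  (* D_j = U_{v in D_j cap Gamma_i} v D_i  for j > i >= 1 *)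
  (HDstr : forall i j, 1 <= i -> i < j -> forall g,
      In g (D j) <-> exists v d, In v (D j) /\ Gam i v /\ In d (D i) /\ g = mul v d)
  (* the Toeplitz element eta *)
  (eta : G -> nat)
  (Heta : forall m h c, J mul one Gam D m h -> Gam (S m) c ->
            eta (mul h c) = alpha r (S m)) :
  period_structure mul inv one r eta (fun n => Gam (S n)).
Proof.
  destruct HG as (assoc & idl & idr & invl & invr).
  assert (invl_c : forall a b, mul (inv a) (mul a b) = b).
  { intros. rewrite assoc, invl, idl. reflexivity. }
  assert (invr_c : forall a b, mul a (mul (inv a) b) = b).
  { intros. rewrite assoc, invr, idl. reflexivity. }
  assert (inv_inv : forall a, inv (inv a) = a).
  { intros a. rewrite <- (idr (inv (inv a))), <- (invl a), assoc, invl, idl. reflexivity. }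
  assert (inv_mul : forall a b, inv (mul a b) = mul (inv b) (inv a)).
  { intros a b.
    assert (H1: mul (mul a b) (mul (inv b) (inv a)) = one) by (rewrite <- assoc, invr_c, invr; reflexivity).
    rewrite <- (idr (inv (mul a b))), <- H1, assoc, invl, idl. reflexivity. }
  assert (inv_one : inv one = one).
  { rewrite <- (idr (inv one)), invl. reflexivity. }
  assert (G1 : forall k, Gam k one).
  { intros [|k]. apply HGam0. apply (HGnorm (S k) ltac:(lia)). }
  assert (GM : forall k a b, Gam k a -> Gam k b -> Gam k (mul a b)).
  { intros [|k] a b Ha Hb. apply HGam0. apply (HGnorm (S k) ltac:(lia)); auto. }
  assert (GI : forall k a, Gam k a -> Gam k (inv a)).
  { intros [|k] a Ha. apply HGam0. apply (HGnorm (S k) ltac:(lia)); auto. }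
  assert (GC : forall k g h, Gam k h -> Gam k (mul (inv g) (mul h g))).
  { intros [|k] g h Ha. apply HGam0. apply (HGnorm (S k) ltac:(lia)); auto. }
  assert (Gmono : forall j k, j <= k -> forall c, Gam k c -> Gam j c).
  { intros j k Hjk; induction Hjk; auto. intros c Hc; apply IHHjk.
    destruct m. apply HGam0. apply HGdec; [lia|exact Hc]. }
  assert (covinv : forall m g, cov mul one Gam D m g -> exists j h c, j < m /\
            J mul one Gam D j h /\ Gam (S j) c /\ g = mul h c).
  { induction m; simpl; [tauto|]. intros g [H|(h&c&Hh&Hc&->)].
    - destruct (IHm g H) as (j&h&c&?&?&?&?). exists j, h, c. repeat split; auto; lia.
    - exists m, h, c. repeat split; auto. }
  assert (covintro : forall k j h c, j < k -> J mul one Gam D j h -> Gam (S j) c ->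
            cov mul one Gam D k (mul h c)).
  { induction k; intros j h c Hj Hh Hc; [lia|]. simpl.
    destruct (Nat.eq_dec j k) as [->|Hne].
    - right. exists h, c. auto.
    - left. apply (IHk j); auto; lia. }
  assert (JD : forall k h, J mul one Gam D k h -> In h (D k)).
  { intros [|k] h Hh. simpl in Hh. unfold J in Hh; simpl in Hh. subst; apply HD1.
    apply Hh. }
  assert (core : forall k h0 y x, J mul one Gam D k h0 -> Gam k (mul (inv h0) y) ->
     ~ Gam (S k) (mul (inv h0) y) -> In x (D (S k)) -> Gam (S k) (mul (inv x) y) ->
     J mul one Gam D (S k) x).
  { intros k h0 y x Hh0 Hy1 Hy2 Hx Hxy.
    unfold J; simpl. split; [exact Hx|]. intros [Hc | (h'&c&Hh'&Hc&Ex)].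
    - destruct (covinv k x Hc) as (j&h'&c&Hj&Hh'&Hc'&Ex).
      assert (E : h0 = mul h' (mul c (mul (mul (inv x) y) (inv (mul (inv h0) y))))).
      { subst x. gs inv_mul inv_inv inv_one assoc idl idr invl_c invr_c invl invr. reflexivity. }
      assert (Hcov : cov mul one Gam D k h0).
      { rewrite E. apply (covintro k j); auto.
        apply GM; auto. apply GM. apply (Gmono (S j) (S k)); [lia|auto].
        apply GI. apply (Gmono (S j) k); [lia|auto]. }
      destruct k as [|k']; [lia|]. destruct Hh0 as [_ Hn]. exact (Hn Hcov).
    - assert (Hh'D : In h' (D k)) by (apply JD; exact Hh').
      assert (E : mul (inv h') h0 = mul c (mul (mul (inv x) y) (inv (mul (inv h0) y)))).
      { subst x. gs inv_mul inv_inv inv_one assoc idl idr invl_c invr_c invl invr. reflexivity. }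
      assert (Heq : h' = h0).
      { apply (HDun k); auto. rewrite E.
        apply GM. apply (Gmono k (S k)); [lia|auto].
        apply GM. apply (Gmono k (S k)); [lia|auto]. apply GI; auto. }
      subst h'. apply Hy2. replace (mul (inv h0) y) with (mul c (mul (inv x) y)).
      apply GM; auto. subst x. gs inv_mul inv_inv inv_one assoc idl idr invl_c invr_c invl invr. reflexivity. }
  assert (Jne : forall k, exists h, J mul one Gam D k h).
  { induction k as [|k [h0 Hh0]]. exists one. exact (eq_refl one).
    assert (Hw : exists w, Gam k w /\ ~ Gam (S k) w).
    { destruct k as [|k'].
      - destruct (HGidx1 1 ltac:(lia)) as (f&_&Hf).
        exists (mul (inv (f 0)) (f 1)). split. apply HGam0. apply Hf; lia.
      - apply HGstrict; lia. }
    destruct Hw as (w&Hw1&Hw2).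
    destruct (HDex (S k) (mul h0 w)) as (x&Hx&Hxy).
    exists x. apply (core k h0 (mul h0 w) x); auto; rewrite invl_c; auto. }
  assert (perJ : forall j h c0, J mul one Gam D j h -> Gam (S j) c0 ->
            Per mul r eta (Gam (S j)) (mul h c0)).
  { intros j h c0 Hh Hc0. exists (alpha r (S j)). split. apply alpha_in; auto.
    intros c Hc. replace (mul c (mul h c0)) with (mul h (mul (mul (inv h) (mul c h)) c0)).
    apply Heta; auto. gs inv_mul inv_inv inv_one assoc idl idr invl_c invr_c invl invr. reflexivity. }
  unfold period_structure. split; [|split].
  - intros n g Hg. apply HGdec; [lia|exact Hg].
  - intros n. split.
    + split; [|split].
      * apply (HGnorm (S n) ltac:(lia)).
      * apply HGfin; lia.
      * exists one. exists (alpha r 1). split. apply alpha_in; auto.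
        intros c Hc. rewrite idr. rewrite <- (idl c).
        apply Heta. exact (eq_refl one). apply (Gmono 1 (S n)); [lia|auto].
    + intros g Hg.
      assert (HH : forall k, k <= S n -> Gam k g).
      { induction k as [|k IH]; intros Hk. apply HGam0.
        apply NNPP. intros Hng.
        specialize (IH ltac:(lia)).
        destruct (Jne k) as [h0 Hh0].
        destruct (HDex (S k) (mul (inv g) h0)) as (x&Hx&Hxy).
        assert (HJx : J mul one Gam D (S k) x).
        { apply (core k h0 (mul (inv g) h0) x); auto.
          intros Hin. apply Hng.
            assert (Hg' : Gam (S k) (mul (inv (inv h0)) (mul (mul (inv h0) (mul (inv g) h0)) (inv h0)))).
            { apply GC; auto. }
            revert Hg'. gs inv_mul inv_inv inv_one assoc idl idr invl_c invr_c invl invr. intros Hg'. apply GI in Hg'. rewrite inv_inv in Hg'. exact Hg'. }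
        assert (E1 : eta (mul x one) = alpha r (S (S k))) by (apply Heta; auto).
        rewrite idr in E1.
        assert (Hper : Per_a mul eta (Gam (S n)) (alpha r (S k)) (mul g x)).
        { intros c Hc.
          replace (mul c (mul g x)) with (mul h0 (mul (mul (inv h0) (mul c h0)) (inv (mul (inv x) (mul (inv g) h0))))).
          apply Heta; auto. apply GM. apply GC. apply (Gmono (S k) (S n)); [lia|auto].
          apply GI; auto. gs inv_mul inv_inv inv_one assoc idl idr invl_c invr_c invl invr. reflexivity. }
        pose proof (Hg (alpha r (S k)) (alpha_in r (S k) Hr) (mul g x) Hper one (G1 _)) as E2.
        unfold shift in E2. revert E2. gs inv_mul inv_inv inv_one assoc idl idr invl_c invr_c invl invr. rewrite E1. apply (alpha_neq r (S k) Hr). }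
      apply HH; lia.
  - intros g. destruct (HDcov g) as [i Hi].
    destruct (classic (cov mul one Gam D i g)) as [Hc|Hc].
    + destruct (covinv i g Hc) as (j&h&c&_&Hh&Hc'&->). exists j. apply perJ; auto.
    + destruct i as [|i].
      * apply HD0 in Hi. subst g. exists 0. rewrite <- (idl one) at 1. apply perJ; auto.
        exact (eq_refl one).
      * exists (S i). rewrite <- (idr g). apply perJ; auto. split; auto.
Qed.
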